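(* Let $p,q$ be positive integers with $p+q$ odd. For all $n\ge1$: (a) $y_n,[p]_n,[q]_n\in\mathcal{J}^{p,q}_n$; (b) $\psi_n(y_n)=1$, $\psi_n([p]_n)=p$, $\psi_n([q]_n)=q$ in $\mathbb{Z}_{2^{\lfloor n/2\rfloor}}$; (c) $\Delta_n(y_n)=(0,p-q)$, $\Delta_n([p]_n)=(1,p(p-q))$, $\Delta_n([q]_n)=(1,q(p-q))$ in $D_{2^{\lfloor n/2\rfloor+1}}$ (integers reduced modulo $2^{\lfloor n/2\rfloor}$).
   Context: Let $p,q$ be positive integers with $p+q$ odd. $\mathbb{Z}_{2^k}$ denotes the integers modulo $2^k$ ($\mathbb{Z}_1$ trivial); as $p+q$ is odd, division by $p+q$ and $(p+q)^2$ is well defined in $\mathbb{Z}_{2^k}$. For $m\ge1$, $D_{2m}$ is the dihedral group of order $2m$, realized as pairs $(f,x)$, $f\in\mathbb{Z}_2$, $x\in\mathbb{Z}_m$, with product $(f_1,x_1)(f_2,x_2)=(f_1+f_2,x_1+(-1)^{f_1}x_2)$. Define $\Phi:D_{2m}\to D_{2m}$, $\Phi((f,x))=(f,\delta(f=1)(p+q)(p-q)-x)$, where $\delta(f=1)$ is $1$ if $f=1$ and $0$ otherwise. $\mathrm{Aut}(T_1)$ is the trivial group $\{e\}$; for $k\ge1$, $\mathrm{Aut}(T_{k+1})$ is the set of triples $g=(g_f,g_L,g_R)$, $g_f\in\mathbb{Z}_2$, $g_L,g_R\in\mathrm{Aut}(T_k)$, with product $(f,A,B)(g,C,D)=(f+g,AC,BD)$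 if $f=0$ and $(f+g,AD,BC)$ if $f=1$; subscripts chain ($g_{LR}=(g_L)_R$, $g_{Lf}=(g_L)_f$). Recursively: $\mathcal{J}_1=\mathrm{Aut}(T_2)$, $\psi_1=0$, $\Delta_1(g)=(g_f,0)$; $\mathcal{J}_2=\{g\in\mathrm{Aut}(T_3):g_L=g_R\}$, $\psi_2(g)=\delta(g_{Lf}=1)\in\mathbb{Z}_2$, $\Delta_2(g)=(g_f,\psi_2(g))$; for $n\ge3$, $\mathcal{J}_n=\{g\in\mathrm{Aut}(T_{n+1}):g_L,g_R\in\mathcal{J}_{n-1},\ \Delta_{n-1}(g_L)=\Phi(\Delta_{n-1}(g_R))\}$, with $\psi_n:\mathcal{J}_n\to\mathbb{Z}_{2^{\lfloor n/2\rfloor}}$ given by $\psi_n(g)=(\psi_{n-1}(g_L)+\psi_{n-1}(g_R))/(p+q)$ for odd $n$ and $\psi_n(g)=\big(2(\psi_{n-2}(g_{LL})+\psi_{n-2}(g_{RL}))-\delta(g_{Lf}=1)(p+q)(p-q)\big)/(p+q)^2$ for even $n$ (with $2\psi_{n-2}(\cdot)$ read in $\mathbb{Z}_{2^{n/2}}$), and $\Delta_n:\mathcal{J}_n\to D_{2^{\lfloor n/2\rfloor+1}}$ given by $\Delta_n(g)=(g_f,\psi_{n-1}(g_L)-\psi_{n-1}(g_R))$ for odd $n$ and $\Delta_n(g)=(g_f,(p+q)\psi_n(g)-2\psi_{n-1}(g_R))$ for even $n$. Elements $[p]_n,[q]_n\in\mathrm{Aut}(T_{n+1})$: $[p]_1=[q]_1=(1,e,e)$,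 and for $n\ge2$, $[p]_n=(1,[p]_{n-1}^{\,p},[q]_{n-1}^{\,p})$, $[q]_n=(1,[p]_{n-1}^{\,q},[q]_{n-1}^{\,q})$ (powers in $\mathrm{Aut}(T_n)$). Also $y_n=(0,[p]_{n-1},[q]_{n-1})$ for $n\ge2$, and $y_1=(0,e,e)$ is the identity of $\mathrm{Aut}(T_2)$. *)

(* Defs.v *)
From mathcomp Require Import all_boot all_order all_algebra.
Unset Printing Implicit Defensive.
Import Order.TTheory GRing.Theory Num.Theory.
Local Open Scope ring_scope.

(* autT k = Aut(T_{k+1}):  autT 0 = Aut(T_1) = {e},
   autT (k+1) = Aut(T_{k+2}) = triples (g_f, g_L, g_R), g_f : Z_2 (= bool). *)
Fixpoint autT (k : nat) : Type :=
  match k with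
  | 0 => unit
  | k'.+1 => (bool * autT k' * autT k')%type
  end.

Definition af {k : nat} (g : autT k.+1) : bool := g.1.1.
Definition aL {k : nat} (g : autT k.+1) : autT k := g.1.2.
Definition aR {k : nat} (g : autT k.+1) : autT k := g.2.

Fixpoint amul (k : nat) : autT k -> autT k -> autT k :=
  match k return autT k -> autT k -> autT k with
  | 0 => fun _ _ => tt
  | k'.+1 => fun x y =>
      let: (f, A, B) := x in
      let: (g, C, D) := y in
      (addb f g,
       if f then amul k' A D else amul k' A C,
       if f then amul k' B C else amul k' B D)
  end.

Fixpoint aone (k : nat) : autT k :=
  match k return autT k with
  | 0 => tt
  | k'.+1 => (false, aone k', aone k')
  end.

Definition apow (k : nat) (x : autT k) (m : nat) : autT k :=
  iter m (amul k x) (aone k).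

(* Z_{2^k}: elements represented by integer representatives;
   md k x = canonical representative of x in [0, 2^k). *)
Definition md (k : nat) (x : int) : int := (x %% (2 ^ k)%:Z)%Z.

(* division a / b in Z_{2^k} (b odd): the unique x in [0,2^k) with x*b = a mod 2^k *)
Definition dv (k : nat) (a b : int) : int :=
  if [pick x : 'I_(2 ^ k) | ((2 ^ k)%:Z %| x%:Z * b - a)%Z] is Some x
  then x%:Z else 0.

Definition delta (b : bool) : int := if b then 1 else 0.

(* psi_n : J_n -> Z_{2^{floor(n/2)}}, extended to all of Aut(T_{n+1}).
   Values are canonical representatives in [0, 2^{floor(n/2)}). *)
Fixpoint psi (p q : nat) (n : nat) {struct n} : autT n -> int :=
  match n return autT n -> int with
  | 0 => fun _ => 0
  | S n1 =>
    match n1 as m return (autT m -> int) -> autT m.+1 -> int with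
    | 0 => fun _ _ => 0
    | S n2 => fun psi_n1 =>
      match n2 as m return (autT m -> int) -> (autT m.+1 -> int) -> autT m.+2 -> int with
      | 0 => fun _ _ g => delta (af (aL g))
      | S n3 => fun psi_n2 psi_n1 g =>
          if odd n3.+3 then
            dv (n3.+3)./2 (psi_n1 (aL g) + psi_n1 (aR g)) (p + q)%:Z
          else
            dv (n3.+3)./2
               (2 * (psi_n2 (aL (aL g)) + psi_n2 (aL (aR g)))
                - delta (af (aL g)) * (p + q)%:Z * (p%:Z - q%:Z))
               ((p + q)%:Z ^+ 2)
      end (psi p q n2) psi_n1
    end (psi p q n1)
  end.

(* D_{2m} elements (f, x), f : Z_2, x : Z_m, with x given by a representative *)
Definition nD (k : nat) (d : bool * int) : bool * int := (d.1, md k d.2).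

Definition Phi (p q : nat) (k : nat) (d : bool * int) : bool * int :=
  (d.1, md k (delta d.1 * (p + q)%:Z * (p%:Z - q%:Z) - d.2)).

(* Delta_n : J_n -> D_{2^{floor(n/2)+1}}, extended to all of Aut(T_{n+1}) *)
Definition Delta (p q : nat) (n : nat) : autT n -> bool * int :=
  match n return autT n -> bool * int with
  | 0 => fun _ => (false, 0)
  | 1 => fun g => (af g, 0)
  | 2 => fun g => (af g, psi p q 2 g)
  | S (S (S k as k1) as k2) => fun g =>
      if odd k2.+1 then
        (af g, md (k2.+1)./2 (psi p q k2 (aL g) - psi p q k2 (aR g)))
      else
        (af g, md (k2.+1)./2 ((p + q)%:Z * psi p q k2.+1 g
                              - 2 * psi p q k2 (aR g)))
  end.

(* membership in J_n (J_0 is not defined in the paper; junk value True) *)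
Fixpoint inJ (p q : nat) (n : nat) {struct n} : autT n -> Prop :=
  match n return autT n -> Prop with
  | 0 => fun _ => True
  | S n1 =>
    match n1 as m return (autT m -> Prop) -> autT m.+1 -> Prop with
    | 0 => fun _ _ => True
    | S n2 => fun inJ_n1 =>
      match n2 as m return (autT m.+1 -> Prop) -> autT m.+2 -> Prop with
      | 0 => fun _ g => aL g = aR g
      | S n3 => fun inJ_n1 g =>
          [/\ inJ_n1 (aL g), inJ_n1 (aR g) &
              nD (n3.+2)./2 (Delta p q n3.+2 (aL g))
              = Phi p q (n3.+2)./2 (Delta p q n3.+2 (aR g))]
      end inJ_n1
    end (inJ p q n1)
  end.

(* ([p]_n, [q]_n) in Aut(T_{n+1}); index 0 is a junk value *)
Fixpoint pq (p q : nat) (n : nat) {struct n} : autT n * autT n :=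
  match n return autT n * autT n with
  | 0 => (tt, tt)
  | S n1 =>
    match n1 as m return autT m * autT m -> autT m.+1 * autT m.+1 with
    | 0 => fun _ => ((true, tt, tt), (true, tt, tt))
    | S n2 => fun r =>
        ((true, apow _ r.1 p, apow _ r.2 p), (true, apow _ r.1 q, apow _ r.2 q))
    end (pq p q n1)
  end.

Definition brp (p q n : nat) : autT n := (pq p q n).1.
Definition brq (p q n : nat) : autT n := (pq p q n).2.

Definition yy (p q n : nat) : autT n :=
  match n return autT n with
  | 0 => tt
  | 1 => (false, tt, tt)
  | S (S k as k1) => (false, brp p q k1, brq p q k1)
  end.

(* Main.v *)
Require Import Defs.
From mathcomp Require Import all_boot all_order all_algebra.
From mathcomp Require Import ring.
Import Order.TTheory GRing.Theory Num.Theory.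
Set Implicit Arguments. Unset Strict Implicit.
Local Open Scope ring_scope.

Definition M (k : nat) : int := (2 ^ k)%N%:Z.
Definition eqm (k : nat) (a b : int) := (M k %| a - b)%Z.

Lemma eqm_md k a b : md k a = md k b <-> eqm k a b.
Proof.
rewrite /eqm /md /M -eqz_mod_dvd; split; first by move=> ->.
by move/eqP.
Qed.

Lemma eqm_refl k a : eqm k a a.
Proof. by rewrite /eqm subrr dvdz0. Qed.
Lemma eqm_eq k a b : a = b -> eqm k a b.
Proof. by move=> ->; apply: eqm_refl. Qed.
Lemma eqm_sym k a b : eqm k a b -> eqm k b a.
Proof. by rewrite /eqm -opprB rpredN. Qed.
Lemma eqm_trans k a b c : eqm k a b -> eqm k b c -> eqm k a c.
Proof.
rewrite /eqm => h1 h2; rewrite (_ : a - c = (a - b) + (b - c)); last by ring.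
exact: rpredD.
Qed.
Lemma eqmD k a b c d : eqm k a b -> eqm k c d -> eqm k (a + c) (b + d).
Proof.
rewrite /eqm => h1 h2; rewrite (_ : a + c - (b + d) = (a - b) + (c - d)); last by ring.
exact: rpredD.
Qed.
Lemma eqmN k a b : eqm k a b -> eqm k (- a) (- b).
Proof. by rewrite /eqm -opprD rpredN. Qed.
Lemma eqmB k a b c d : eqm k a b -> eqm k c d -> eqm k (a - c) (b - d).
Proof. by move=> h1 h2; apply: eqmD => //; apply: eqmN. Qed.
Lemma eqmMl k c a b : eqm k a b -> eqm k (c * a) (c * b).
Proof. by rewrite /eqm -mulrBr; apply: dvdz_mull. Qed.
Lemma eqmMr k c a b : eqm k a b -> eqm k (a * c) (b * c).
Proof. by rewrite ![_ * c]mulrC; apply: eqmMl. Qed.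
Lemma eqmM k a b c d : eqm k a b -> eqm k c d -> eqm k (a * c) (b * d).
Proof. by move=> h1 h2; apply: eqm_trans (eqmMr c h1) (eqmMl b h2). Qed.
Lemma eqm0 a b : eqm 0 a b.
Proof. by rewrite /eqm /M expn0 dvd1z. Qed.
Lemma eqm_pred k a b : eqm k.+1 a b -> eqm k a b.
Proof.
rewrite /eqm /M => h; apply: dvdz_trans h.
by rewrite expnS PoszM dvdz_mull.
Qed.
Lemma eqm2 k a b : eqm k a b -> eqm k.+1 (2 * a) (2 * b).
Proof.
rewrite /eqm /M expnS PoszM -mulrBr dvdz_mul2l //.
Qed.
Lemma eqm_mdl k a : eqm k (md k a) a.
Proof. by apply/eqm_md; rewrite /md modz_mod. Qed.

Lemma coprime_M k c : odd c -> coprimez (M k) c%:Z.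
Proof.
move=> oc; rewrite coprimezE /M !absz_nat; apply: coprimeXl.
by rewrite coprime2n.
Qed.

Lemma dv_spec k a c : odd c -> eqm k (dv k a c%:Z * c%:Z) a.
Proof.
move=> oc; rewrite /dv; case: pickP => [x /= Hx|H]; first exact: Hx.
exfalso.
have /coprimezP [[u v] /= Huv] := coprime_M k oc.
have Mpos : (0 < M k)%R by rewrite /M ltz_nat expn_gt0.
set y := ((a * v) %% M k)%Z.
have y0 : (0 <= y)%R by rewrite modz_ge0 // gt_eqF.
have y1 : (y < M k)%R by rewrite ltz_pmod.
have ya : `|y|%N = y :> int by rewrite gez0_abs.
have yl : (`|y| < 2 ^ k)%N by rewrite -ltz_nat ya.
have E : y * c%:Z - a = (y - a * v) * c%:Z - a * u * M k + a * (u * M k + v * c%:Z - 1) by ring.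
move: (H (Ordinal yl)) => /= /negbT/negP; rewrite ya E Huv subrr mulr0 addr0; apply.
apply: rpredD.
  apply: dvdz_mulr; rewrite /y.
  by rewrite -eqz_mod_dvd modz_mod.
by rewrite rpredN dvdz_mull.
Qed.

Lemma dv_uniq k a c x : odd c -> eqm k (x * c%:Z) a -> eqm k (dv k a c%:Z) x.
Proof.
move=> oc h.
have h2 : eqm k (dv k a c%:Z * c%:Z) (x * c%:Z).
  by apply: eqm_trans (dv_spec k a oc) (eqm_sym h).
move: h2; rewrite /eqm -mulrBl Gauss_dvdzl //.
exact: coprime_M.
Qed.
Lemma psiE3 p q n (g : autT n.+3) : psi p q n.+3 g =
  if odd n.+3 then dv (n.+3)./2 (psi p q n.+2 (aL g) + psi p q n.+2 (aR g)) (p + q)%:Z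
  else dv (n.+3)./2 (2 * (psi p q n.+1 (aL (aL g)) + psi p q n.+1 (aL (aR g)))
                - delta (af (aL g)) * (p + q)%:Z * (p%:Z - q%:Z)) ((p + q)%:Z ^+ 2).
Proof. by []. Qed.
Lemma DeltaE3 p q n (g : autT n.+3) : Delta p q n.+3 g =
  if odd n.+3 then (af g, md (n.+3)./2 (psi p q n.+2 (aL g) - psi p q n.+2 (aR g)))
  else (af g, md (n.+3)./2 ((p + q)%:Z * psi p q n.+3 g - 2 * psi p q n.+2 (aR g))).
Proof. by []. Qed.
Lemma inJE3 p q n (g : autT n.+3) : inJ p q n.+3 g <->
  [/\ inJ p q n.+2 (aL g), inJ p q n.+2 (aR g) &
      nD (n.+2)./2 (Delta p q n.+2 (aL g)) = Phi p q (n.+2)./2 (Delta p q n.+2 (aR g))].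
Proof. by []. Qed.
Lemma psi2 p q (g : autT 2) : psi p q 2 g = delta (af (aL g)). Proof. by []. Qed.
Lemma Delta2 p q (g : autT 2) : Delta p q 2 g = (af g, delta (af (aL g))). Proof. by []. Qed.
Lemma inJ2 p q (g : autT 2) : inJ p q 2 g <-> aL g = aR g. Proof. by []. Qed.
Lemma pqE p q n : pq p q n.+2 = ((true, apow _ (brp p q n.+1) p, apow _ (brq p q n.+1) p),
   (true, apow _ (brp p q n.+1) q, apow _ (brq p q n.+1) q)).
Proof. by []. Qed.
Lemma amulE n f a b e c d : amul n.+1 ((f, a), b) ((e, c), d) =
  (addb f e, if f then amul n a d else amul n a c, if f then amul n b c else amul n b d).
Proof. by []. Qed.
Lemma apowS n x m : apow n x m.+1 = amul n x (apow n x m). Proof. by []. Qed.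
Lemma apow0 n x : apow n x 0 = aone n. Proof. by []. Qed.
Lemma aoneS n : aone n.+1 = (false, aone n, aone n). Proof. by []. Qed.

Arguments amul : simpl never.
Arguments apow : simpl never.
Arguments psi : simpl never.
Arguments Delta : simpl never.
Arguments inJ : simpl never.
Arguments aone : simpl never.

Lemma amul_one n : amul n (aone n) (aone n) = aone n.
Proof. by elim: n => [|n IH] //; rewrite aoneS amulE IH. Qed.

Definition dmul (d e : bool * int) : bool * int :=
  (addb d.1 e.1, d.2 + (if d.1 then - e.2 else e.2)).
Definition Deq k (d e : bool * int) := d.1 = e.1 /\ eqm k d.2 e.2.
Definition PhiR p q (d : bool * int) : bool * int :=
  (d.1, delta d.1 * (p + q)%:Z * (p%:Z - q%:Z) - d.2).

Lemma nD_eq k d e : nD k d = nD k e <-> Deq k d e.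
Proof.
case: d e => [f x] [g y]; rewrite /nD /Deq /=; split.
  by case=> -> /eqm_md.
by case=> -> /eqm_md ->.
Qed.
Lemma Phi_nD p q k d : Phi p q k d = nD k (PhiR p q d). Proof. by []. Qed.

Lemma Deq_refl k d : Deq k d d. Proof. by split => //; apply: eqm_refl. Qed.
Lemma Deq_sym k d e : Deq k d e -> Deq k e d.
Proof. by case=> h1 h2; split => //; apply: eqm_sym. Qed.
Lemma Deq_trans k d e f : Deq k d e -> Deq k e f -> Deq k d f.
Proof. by case=> h1 h2 [h3 h4]; split; [rewrite h1 | apply: eqm_trans h4]. Qed.
Lemma dmul_Deq k d d' e e' : Deq k d d' -> Deq k e e' -> Deq k (dmul d e) (dmul d' e').
Proof.
case: d d' e e' => [f x] [f' x'] [g y] [g' y'] [/= <- h1] [/= <- h2]; split => //=.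
apply: eqmD => //; case: f => //; exact: eqmN.
Qed.
Lemma PhiR_Deq p q k d e : Deq k d e -> Deq k (PhiR p q d) (PhiR p q e).
Proof.
case: d e => [f x] [g y] [/= <- h]; split => //=.
by apply: eqmB => //; apply: eqm_refl.
Qed.
Lemma PhiR_mul p q d e : PhiR p q (dmul d e) = dmul (PhiR p q d) (PhiR p q e).
Proof.
case: d e => [f x] [g y]; rewrite /PhiR /dmul /=.
by case: f; case: g; rewrite /delta /=; congr pair; ring.
Qed.
Lemma PhiRK p q d : PhiR p q (PhiR p q d) = d.
Proof. by case: d => [f x]; rewrite /PhiR /=; congr pair; ring. Qed.

Definition HomP p q n := inJ p q n (aone n) /\ forall g h, inJ p q n g -> inJ p q n h ->
  [/\ inJ p q n (amul n g h),
      eqm n./2 (psi p q n (amul n g h)) (psi p q n g + psi p q n h) &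
      Deq n./2 (Delta p q n (amul n g h)) (dmul (Delta p q n g) (Delta p q n h))].

Lemma psi_one p q n : HomP p q n -> eqm n./2 (psi p q n (aone n)) 0.
Proof.
case=> h1 H; case: (H _ _ h1 h1); rewrite amul_one => _ h _.
have := eqmB h (eqm_refl _ (psi p q n (aone n))).
rewrite subrr addrK => /eqm_sym //.
Qed.

Lemma Delta_one p q n : HomP p q n -> Deq n./2 (Delta p q n (aone n)) (false, 0).
Proof.
case=> h1 H; case: (H _ _ h1 h1); rewrite amul_one => _ _.
case: (Delta p q n (aone n)) => f x [/= hf hx].
have f0 : f = false by move: hf; clear hx; case: f.
subst f; split => //=; move: hx => /= hx.
have := eqmB hx (eqm_refl _ x).
rewrite subrr addrK => /eqm_sym //.
Qed.

Lemma Delta1 p q (g : autT 1) : Delta p q 1 g = (af g, 0). Proof. by []. Qed.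

Lemma HomP1 p q : HomP p q 1.
Proof.
split; first exact I.
move=> [[f a] b] [[e c] d] _ _; split; first exact I.
  exact: eqm0.
by rewrite !Delta1 amulE; split => //; apply: eqm0.
Qed.

Lemma HomP2 p q : HomP p q 2.
Proof.
split; first by apply/inJ2.
move=> [[f a] b] [[e c] d] /inJ2 /= hab /inJ2 /= hcd.
rewrite /aL /aR /= in hab hcd; subst b d.
split.
- by apply/inJ2; rewrite amulE /aL /aR /=; case: f.
- rewrite !psi2 amulE /aL /=.
  case: a => [[fa []] []]; case: c => [[fc []] []].
  by case: f; rewrite amulE /af /=; case: fa; case: fc.
- rewrite !Delta2 amulE /aL /=.
  case: a => [[fa []] []]; case: c => [[fc []] []].
  split => //.
  by case: f; rewrite amulE /af /=; case: fa; case: fc.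
Qed.

Lemma inJ3P p q n (g : autT n.+3) : inJ p q n.+3 g <->
  [/\ inJ p q n.+2 (aL g), inJ p q n.+2 (aR g) &
      Deq (n.+2)./2 (Delta p q n.+2 (aL g)) (PhiR p q (Delta p q n.+2 (aR g)))].
Proof.
rewrite inJE3 Phi_nD; split; case=> h1 h2 h3; split => //; exact/nD_eq.
Qed.

Lemma closure3 p q n (Hn : HomP p q n.+2) g h :
  inJ p q n.+3 g -> inJ p q n.+3 h -> inJ p q n.+3 (amul n.+3 g h).
Proof.
case: Hn => _ Hn.
case: g h => [[f a] b] [[e c] d] /inJ3P [Ja Jb Jab] /inJ3P [Jc Jd Jcd].
rewrite /aL /aR /= in Ja Jb Jab Jc Jd Jcd.
have Jdc : Deq (n.+2)./2 (Delta p q n.+2 d) (PhiR p q (Delta p q n.+2 c)).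
  by rewrite -[Delta p q n.+2 d](PhiRK p q); apply: PhiR_Deq; apply: Deq_sym.
apply/inJ3P; rewrite amulE /aL /aR /=.
case: f.
- case: (Hn _ _ Ja Jd) => J1 _ D1; case: (Hn _ _ Jb Jc) => J2 _ D2.
  split => //; apply: Deq_trans D1 _.
  apply: Deq_trans (dmul_Deq Jab Jdc) _.
  by rewrite -PhiR_mul; apply: PhiR_Deq; apply: Deq_sym.
- case: (Hn _ _ Ja Jc) => J1 _ D1; case: (Hn _ _ Jb Jd) => J2 _ D2.
  split => //; apply: Deq_trans D1 _.
  apply: Deq_trans (dmul_Deq Jab Jcd) _.
  by rewrite -PhiR_mul; apply: PhiR_Deq; apply: Deq_sym.
Qed.

Lemma one3 p q n (Hn : HomP p q n.+2) : inJ p q n.+3 (aone n.+3).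
Proof.
apply/inJ3P; rewrite aoneS /aL /aR /=; split; try exact: Hn.1.
apply: Deq_trans (Delta_one Hn) _.
rewrite -[(false, 0)](PhiRK p q); apply: PhiR_Deq.
apply: Deq_trans _ (Deq_sym (Delta_one Hn)).
by split => //=; apply: eqm_eq; rewrite /delta; ring.
Qed.
Lemma half3 t : (t.*2.+3)./2 = t.+1. Proof. by rewrite /= uphalf_double. Qed.
Lemma half2 t : (t.*2.+2)./2 = t.+1. Proof. by rewrite /= half_double. Qed.
Lemma half4 t : (t.*2.+4)./2 = t.+2. Proof. by rewrite /= half_double. Qed.
Lemma half1 t : (t.*2.+1)./2 = t. Proof. by rewrite /= uphalf_double. Qed.
Lemma odd3 t : odd t.*2.+3 = true. Proof. by rewrite /= odd_double. Qed.
Lemma odd4 t : odd t.*2.+4 = false. Proof. by rewrite /= odd_double. Qed.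

Lemma af_mul n (g h : autT n.+1) : af (amul n.+1 g h) = addb (af g) (af h).
Proof. by case: g h => [[f a] b] [[e c] d]. Qed.
Lemma aL_mul n (g h : autT n.+1) : aL (amul n.+1 g h) =
  if af g then amul n (aL g) (aR h) else amul n (aL g) (aL h).
Proof. by case: g h => [[f a] b] [[e c] d]. Qed.
Lemma aR_mul n (g h : autT n.+1) : aR (amul n.+1 g h) =
  if af g then amul n (aR g) (aL h) else amul n (aR g) (aR h).
Proof. by case: g h => [[f a] b] [[e c] d]. Qed.

Lemma HomPodd p q t (hpq : odd (p + q)) : HomP p q t.*2.+2 -> HomP p q t.*2.+3.
Proof.
move=> H; split; first exact: one3 H.
move=> g h Jg Jh; split; first exact: closure3.
- have E x : psi p q t.*2.+3 x =
    dv t.+1 (psi p q t.*2.+2 (aL x) + psi p q t.*2.+2 (aR x)) (p + q)%:Z.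
    by rewrite psiE3 odd3 half3.
  rewrite half3 !E.
  case: H => _ H.
  case/inJ3P: Jg => [Ja Jb _]; case/inJ3P: Jh => [Jc Jd _].
  rewrite aL_mul aR_mul.
  apply: dv_uniq => //.
  apply: eqm_trans (_ : eqm _ _ ((psi p q t.*2.+2 (aL g) + psi p q t.*2.+2 (aR g))
                         + (psi p q t.*2.+2 (aL h) + psi p q t.*2.+2 (aR h)))) _.
    by rewrite mulrDl; apply: eqmD; apply: dv_spec.
  apply: eqm_sym.
  case: (af g).
  + case: (H _ _ Ja Jd) => _ h1 _; case: (H _ _ Jb Jc) => _ h2 _.
    rewrite half2 in h1 h2.
    apply: eqm_trans (eqmD h1 h2) _; apply: eqm_eq; ring.
  + case: (H _ _ Ja Jc) => _ h1 _; case: (H _ _ Jb Jd) => _ h2 _.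
    rewrite half2 in h1 h2.
    apply: eqm_trans (eqmD h1 h2) _; apply: eqm_eq; ring.
- have E x : Delta p q t.*2.+3 x =
    (af x, md t.+1 (psi p q t.*2.+2 (aL x) - psi p q t.*2.+2 (aR x))).
    by rewrite DeltaE3 odd3 half3.
  rewrite half3 !E.
  case: H => _ H.
  case/inJ3P: Jg => [Ja Jb _]; case/inJ3P: Jh => [Jc Jd _].
  rewrite aL_mul aR_mul af_mul /dmul /=.
  split => //.
  apply: eqm_trans (eqm_mdl _ _) _.
  case: (af g).
  + case: (H _ _ Ja Jd) => _ h1 _; case: (H _ _ Jb Jc) => _ h2 _.
    rewrite half2 in h1 h2.
    apply: eqm_trans (eqmB h1 h2) _.
    apply: eqm_sym; apply: eqm_trans (eqmD (eqm_mdl _ _) (eqmN (eqm_mdl _ _))) _.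
    apply: eqm_eq; ring.
  + case: (H _ _ Ja Jc) => _ h1 _; case: (H _ _ Jb Jd) => _ h2 _.
    rewrite half2 in h1 h2.
    apply: eqm_trans (eqmB h1 h2) _.
    apply: eqm_sym; apply: eqm_trans (eqmD (eqm_mdl _ _) (eqm_mdl _ _)) _.
    apply: eqm_eq; ring.
Qed.

Lemma eqm_use5 k c1 c2 c3 c4 c5 u1 v1 u2 v2 u3 v3 u4 v4 u5 v5 X Y :
  eqm k u1 v1 -> eqm k u2 v2 -> eqm k u3 v3 -> eqm k u4 v4 -> eqm k u5 v5 ->
  X - Y = c1 * (u1 - v1) + c2 * (u2 - v2) + c3 * (u3 - v3) + c4 * (u4 - v4)
          + c5 * (u5 - v5) ->
  eqm k X Y.
Proof.
rewrite /eqm => h1 h2 h3 h4 h5 ->.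
by rewrite !rpredD // dvdz_mull.
Qed.
Arguments eqm_use5 {k} c1 c2 c3 c4 c5 {u1 v1 u2 v2 u3 v3 u4 v4 u5 v5 X Y}.

Lemma eqm_cancel k x y c : odd c -> eqm k (x * c%:Z) (y * c%:Z) -> eqm k x y.
Proof. by move=> oc; rewrite /eqm -mulrBl Gauss_dvdzl //; apply: coprime_M. Qed.

Lemma even_arith k (fa fc : bool) (P Q aL bL cL cR dL dR x y : int) :
  eqm k (cL - cR) (delta fc * P * Q - (dL - dR)) ->
  eqm k.+1 (2 * x) (2 * aL + 2 * (if fa then cR else cL)) ->
  eqm k.+1 (2 * y) (2 * bL + 2 * (if fa then dR else dL)) ->
  eqm k.+1 (2 * (x + y) - delta (addb fa fc) * P * Q)
           ((2 * (aL + bL) - delta fa * P * Q) + (2 * (cL + dL) - delta fc * P * Q)).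
Proof.
move=> /eqm2 HJ Ax Ay; have R := eqm_refl k.+1 0.
case: fa Ax Ay => Ax Ay.
- by case: fc HJ => HJ; apply: (eqm_use5 1 1 (-1) 0 0 Ax Ay HJ R R);
    rewrite /delta /=; ring.
- by case: fc HJ => HJ; apply: (eqm_use5 1 1 0 0 0 Ax Ay R R R);
    rewrite /delta /=; ring.
Qed.

Lemma sq_pq p q : (p + q)%:Z ^+ 2 = ((p + q) ^ 2)%N%:Z.
Proof. by rewrite expr2 -PoszM mulnn. Qed.
Lemma odd_sq p q : odd (p + q) -> odd ((p + q) ^ 2).
Proof. by move=> h; rewrite oddX h orbT. Qed.

Definition Pe p q t (g : autT t.*2.+4) : int :=
  2 * (psi p q t.*2.+2 (aL (aL g)) + psi p q t.*2.+2 (aL (aR g)))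
  - delta (af (aL g)) * (p + q)%:Z * (p%:Z - q%:Z).
Arguments Pe : clear implicits.

Lemma psiE4 p q t (g : autT t.*2.+4) :
  psi p q t.*2.+4 g = dv t.+2 (Pe p q t g) ((p + q) ^ 2)%N%:Z.
Proof. by rewrite psiE3 odd4 half4 sq_pq. Qed.
Lemma psiO p q t (c : autT t.*2.+3) :
  psi p q t.*2.+3 c = dv t.+1 (psi p q t.*2.+2 (aL c) + psi p q t.*2.+2 (aR c)) (p + q)%:Z.
Proof. by rewrite psiE3 odd3 half3. Qed.
Lemma DeltaO p q t (c : autT t.*2.+3) : Delta p q t.*2.+3 c =
    (af c, md t.+1 (psi p q t.*2.+2 (aL c) - psi p q t.*2.+2 (aR c))).
Proof. by rewrite DeltaE3 odd3 half3. Qed.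
Lemma DeltaEv p q t (g : autT t.*2.+4) : Delta p q t.*2.+4 g =
  (af g, md t.+2 ((p + q)%:Z * psi p q t.*2.+4 g - 2 * psi p q t.*2.+3 (aR g))).
Proof. by rewrite DeltaE3 odd4 half4. Qed.

Lemma Jev p q t (h : autT t.*2.+4) : inJ p q t.*2.+4 h ->
 [/\ inJ p q t.*2.+3 (aL h), inJ p q t.*2.+3 (aR h), af (aL h) = af (aR h) &
  eqm t.+1 (psi p q t.*2.+2 (aL (aL h)) - psi p q t.*2.+2 (aR (aL h)))
      (delta (af (aR h)) * (p + q)%:Z * (p%:Z - q%:Z)
       - (psi p q t.*2.+2 (aL (aR h)) - psi p q t.*2.+2 (aR (aR h))))].
Proof.
case/inJ3P => Ja Jb; rewrite half3 !DeltaO /PhiR /=; case=> /= hf he; split => //.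
apply: eqm_trans (eqm_sym (eqm_mdl _ _)) _; apply: eqm_trans he _.
exact: eqmB (eqm_refl _ _) (eqm_mdl _ _).
Qed.

Lemma L_even p q t (hpq : odd (p + q)) (h : autT t.*2.+4) : inJ p q t.*2.+4 h ->
  eqm t.+1 ((p + q)%:Z * psi p q t.*2.+4 h)
           (psi p q t.*2.+3 (aL h) + psi p q t.*2.+3 (aR h)).
Proof.
case/Jev => _ _ fcd HJ.
apply: (@eqm_cancel _ _ _ (p + q)) => //.
have G := eqm_pred (dv_spec t.+2 (Pe p q t h) (odd_sq hpq)); rewrite -psiE4 in G.
have H1 := dv_spec t.+1 (psi p q t.*2.+2 (aL (aL h)) + psi p q t.*2.+2 (aR (aL h))) hpq.
have H2 := dv_spec t.+1 (psi p q t.*2.+2 (aL (aR h)) + psi p q t.*2.+2 (aR (aR h))) hpq.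
rewrite -psiO in H1; rewrite -psiO in H2.
rewrite /Pe fcd in G.
apply: (eqm_use5 1 (-1) (-1) 1 0 G H1 H2 HJ (eqm_refl _ 0)).
rewrite -sq_pq; ring.
Qed.

Lemma psi_even_add p q t (hpq : odd (p + q)) (H2 : HomP p q t.*2.+2)
  (g h : autT t.*2.+4) : inJ p q t.*2.+4 g -> inJ p q t.*2.+4 h ->
  eqm t.+2 (psi p q t.*2.+4 (amul t.*2.+4 g h))
           (psi p q t.*2.+4 g + psi p q t.*2.+4 h).
Proof.
move=> Jg Jh.
have [Ja Jb fab HJg] := Jev Jg; have [Jc Jd fcd HJh] := Jev Jh.
case/inJ3P: (Ja) => Jal Jar _; case/inJ3P: (Jb) => Jbl Jbr _.
case/inJ3P: (Jc) => Jcl Jcr _; case/inJ3P: (Jd) => Jdl Jdr _.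
case: H2 => _ Hm.
have Add x y : inJ p q t.*2.+2 x -> inJ p q t.*2.+2 y ->
    eqm t.+2 (2 * psi p q t.*2.+2 (amul t.*2.+2 x y))
             (2 * psi p q t.*2.+2 x + 2 * psi p q t.*2.+2 y).
  move=> Jx Jy; case: (Hm _ _ Jx Jy) => _ e _; rewrite half2 in e.
  by rewrite -mulrDr; apply: eqm2.
have osq := odd_sq hpq.
rewrite !psiE4; apply: dv_uniq => //.
have G1 := dv_spec t.+2 (Pe p q t g) osq; have G2 := dv_spec t.+2 (Pe p q t h) osq.
apply: eqm_trans (_ : eqm _ _ (Pe p q t g + Pe p q t h)) _.
  by rewrite mulrDl; apply: eqmD.
apply: eqm_sym.
rewrite /Pe aL_mul aR_mul.
rewrite -fcd in HJh.
case: (af g).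
- rewrite !aL_mul af_mul -fab -fcd.
  have HJ' : eqm t.+1 (psi p q t.*2.+2 (aL (aR h)) - psi p q t.*2.+2 (aR (aR h)))
      (delta (af (aL h)) * (p + q)%:Z * (p%:Z - q%:Z)
       - (psi p q t.*2.+2 (aL (aL h)) - psi p q t.*2.+2 (aR (aL h)))).
    have R := eqm_refl t.+1 0.
    by apply: (eqm_use5 1 0 0 0 0 HJh R R R R); ring.
  have Ax : eqm t.+2 (2 * psi p q t.*2.+2 (if af (aL g) then amul t.*2.+2 (aL (aL g)) (aR (aR h))
                                         else amul t.*2.+2 (aL (aL g)) (aL (aR h))))
     (2 * psi p q t.*2.+2 (aL (aL g)) + 2 * (if af (aL g) then psi p q t.*2.+2 (aR (aR h))
                                              else psi p q t.*2.+2 (aL (aR h)))).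
    by case: (af (aL g)); apply: Add.
  have Ay : eqm t.+2 (2 * psi p q t.*2.+2 (if af (aL g) then amul t.*2.+2 (aL (aR g)) (aR (aL h))
                                         else amul t.*2.+2 (aL (aR g)) (aL (aL h))))
     (2 * psi p q t.*2.+2 (aL (aR g)) + 2 * (if af (aL g) then psi p q t.*2.+2 (aR (aL h))
                                              else psi p q t.*2.+2 (aL (aL h)))).
    by case: (af (aL g)); apply: Add.
  apply: eqm_trans (even_arith HJ' Ax Ay) _.
  by apply: eqm_eq; ring.
- rewrite !aL_mul af_mul -fab.
  have Ax : eqm t.+2 (2 * psi p q t.*2.+2 (if af (aL g) then amul t.*2.+2 (aL (aL g)) (aR (aL h))
                                         else amul t.*2.+2 (aL (aL g)) (aL (aL h))))
     (2 * psi p q t.*2.+2 (aL (aL g)) + 2 * (if af (aL g) then psi p q t.*2.+2 (aR (aL h))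
                                              else psi p q t.*2.+2 (aL (aL h)))).
    by case: (af (aL g)); apply: Add.
  have Ay : eqm t.+2 (2 * psi p q t.*2.+2 (if af (aL g) then amul t.*2.+2 (aL (aR g)) (aR (aR h))
                                         else amul t.*2.+2 (aL (aR g)) (aL (aR h))))
     (2 * psi p q t.*2.+2 (aL (aR g)) + 2 * (if af (aL g) then psi p q t.*2.+2 (aR (aR h))
                                              else psi p q t.*2.+2 (aL (aR h)))).
    by case: (af (aL g)); apply: Add.
  apply: eqm_trans (even_arith HJh Ax Ay) _.
  by apply: eqm_eq; ring.
Qed.

Lemma HomPeven p q t (hpq : odd (p + q)) :
  HomP p q t.*2.+2 -> HomP p q t.*2.+3 -> HomP p q t.*2.+4.
Proof.
move=> H2 H3; split; first exact: one3 H3.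
move=> g h Jg Jh; split; first exact: closure3.
  by rewrite half4; apply: psi_even_add.
rewrite half4 !DeltaEv /dmul /=; split; first by rewrite af_mul.
have S := psi_even_add hpq H2 Jg Jh.
have Lh := eqm2 (L_even hpq Jh).
have [Ja Jb _ _] := Jev Jg; have [Jc Jd _ _] := Jev Jh.
case: H3 => _ Hm.
have Add x y : inJ p q t.*2.+3 x -> inJ p q t.*2.+3 y ->
    eqm t.+2 (2 * psi p q t.*2.+3 (amul t.*2.+3 x y))
             (2 * psi p q t.*2.+3 x + 2 * psi p q t.*2.+3 y).
  move=> Jx Jy; case: (Hm _ _ Jx Jy) => _ e _; rewrite half3 in e.
  by rewrite -mulrDr; apply: eqm2.
have Mg := eqm_mdl t.+2 ((p + q)%:Z * psi p q t.*2.+4 g - 2 * psi p q t.*2.+3 (aR g)).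
have Mh := eqm_mdl t.+2 ((p + q)%:Z * psi p q t.*2.+4 h - 2 * psi p q t.*2.+3 (aR h)).
apply: eqm_trans (eqm_mdl _ _) _.
rewrite aR_mul; case: (af g).
- have B := Add _ _ Jb Jc.
  apply: (eqm_use5 (p + q)%:Z (-1) (-1) 1 1 S B Mg Mh Lh).
  by rewrite /=; ring.
- have B := Add _ _ Jb Jd.
  apply: (eqm_use5 (p + q)%:Z (-1) (-1) (-1) 0 S B Mg Mh Lh).
  by rewrite /=; ring.
Qed.

Lemma HomAll p q (hpq : odd (p + q)) n : (0 < n)%N -> HomP p q n.
Proof.
have K : forall t, HomP p q t.*2.+1 /\ HomP p q t.*2.+2.
  elim=> [|t [_ IH2]]; first by split; [apply: HomP1 | apply: HomP2].
  have H3 := HomPodd hpq IH2.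
  by split; [exact: H3 | exact: HomPeven hpq IH2 H3].
case: n => // n _.
rewrite -(odd_double_half n); case: (odd n) => /=.
- by rewrite add1n; case: (K n./2).
- by rewrite add0n; case: (K n./2).
Qed.

Lemma af_pow n (x : autT n.+1) m : af (apow n.+1 x m) = af x && odd m.
Proof.
elim: m => [|m IH]; first by rewrite apow0 aoneS /af /= andbF.
by rewrite apowS af_mul IH /=; case: (af x).
Qed.

Lemma pow_J p q n (H : HomP p q n) x m : inJ p q n x -> inJ p q n (apow n x m).
Proof.
move=> Jx; elim: m => [|m IH]; first by rewrite apow0; exact: H.1.
by rewrite apowS; case: (H.2 _ _ Jx IH).
Qed.

Lemma pow_psi p q n (H : HomP p q n) x m : inJ p q n x ->
  eqm n./2 (psi p q n (apow n x m)) (m%:Z * psi p q n x).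
Proof.
move=> Jx; elim: m => [|m IH]; first by rewrite apow0 mul0r; exact: psi_one.
rewrite apowS; case: (H.2 _ _ Jx (pow_J H m Jx)) => _ e _.
apply: eqm_trans e _; have R := eqm_refl n./2 0.
apply: (eqm_use5 1 0 0 0 0 IH R R R R).
by rewrite -addn1 PoszD; ring.
Qed.

Lemma pow_Delta p q n (H : HomP p q n) x m c : inJ p q n x ->
  Deq n./2 (Delta p q n x) (true, c) ->
  Deq n./2 (Delta p q n (apow n x m)) (if odd m then (true, c) else (false, 0)).
Proof.
move=> Jx Dx; elim: m => [|m IH]; first by rewrite apow0; exact: Delta_one.
rewrite apowS; case: (H.2 _ _ Jx (pow_J H m Jx)) => _ _ D.
apply: Deq_trans D _; apply: Deq_trans (dmul_Deq Dx IH) _.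
rewrite /=; case: (odd m); rewrite /dmul /=; split => //; rewrite /=; apply: eqm_eq; ring.
Qed.

Lemma pow_children p q N (H : HomP p q N) (x : autT N.+1) :
  af x = true -> inJ p q N (aL x) -> inJ p q N (aR x) ->
  forall m,
  [/\ inJ p q N (aL (apow N.+1 x m)), inJ p q N (aR (apow N.+1 x m)),
  eqm N./2 (psi p q N (aL (apow N.+1 x m)))
           ((uphalf m)%:Z * psi p q N (aL x) + (m./2)%:Z * psi p q N (aR x)) &
  eqm N./2 (psi p q N (aR (apow N.+1 x m)))
           ((m./2)%:Z * psi p q N (aL x) + (uphalf m)%:Z * psi p q N (aR x))].
Proof.
move=> fx JxL JxR m; elim: m => [|m [Jl Jr IH1 IH2]].
  rewrite apow0 aoneS /aL /aR /= !mul0r addr0.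
  by split; [apply: H.1 | apply: H.1 | apply: psi_one | apply: psi_one].
have R := eqm_refl N./2 0.
rewrite apowS aL_mul aR_mul fx.
case: (H.2 _ _ JxL Jr) => J1 e1 _; case: (H.2 _ _ JxR Jl) => J2 e2 _.
split => //.
- apply: eqm_trans e1 _.
  apply: (eqm_use5 0 0 0 0 1 R R R R IH2).
  by rewrite /= intS; ring.
- apply: eqm_trans e2 _.
  apply: (eqm_use5 0 0 0 0 1 R R R R IH1).
  by rewrite /= intS; ring.
Qed.

Definition SP p q n := (inJ p q n (brp p q n) /\ inJ p q n (brq p q n)) /\
  (eqm n./2 (psi p q n (brp p q n)) p%:Z /\ eqm n./2 (psi p q n (brq p q n)) q%:Z) /\
  (Deq n./2 (Delta p q n (brp p q n)) (true, p%:Z * (p%:Z - q%:Z)) /\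
   Deq n./2 (Delta p q n (brq p q n)) (true, q%:Z * (p%:Z - q%:Z))).

Definition Zm p q n m : autT n.+1 := (true, apow n (brp p q n) m, apow n (brq p q n) m).
Lemma ZmL p q n m : aL (Zm p q n m) = apow n (brp p q n) m. Proof. by []. Qed.
Lemma ZmR p q n m : aR (Zm p q n m) = apow n (brq p q n) m. Proof. by []. Qed.
Lemma Zmf p q n m : af (Zm p q n m) = true. Proof. by []. Qed.
Lemma brpE p q n : brp p q n.+2 = Zm p q n.+1 p. Proof. by []. Qed.
Lemma brqE p q n : brq p q n.+2 = Zm p q n.+1 q. Proof. by []. Qed.
Arguments Zm : simpl never.

Lemma ZJ p q n (H : HomP p q n.+2) (S : SP p q n.+2) m : inJ p q n.+3 (Zm p q n.+2 m).
Proof.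
case: S => [[Jp Jq] [_ [Dp Dq]]].
apply/inJ3P; rewrite ZmL ZmR; split; try exact: pow_J.
have DP := pow_Delta H m Jp Dp; have DQ := pow_Delta H m Jq Dq.
apply: Deq_trans DP _; apply: Deq_sym; apply: Deq_trans (PhiR_Deq p q DQ) _.
case: (odd m); split; rewrite //= /delta; apply: eqm_eq; ring.
Qed.

Lemma Zodd p q t (hpq : odd (p + q)) (H : HomP p q t.*2.+2) (S : SP p q t.*2.+2) m :
  [/\ inJ p q t.*2.+3 (Zm p q t.*2.+2 m),
      eqm t.+1 (psi p q t.*2.+3 (Zm p q t.*2.+2 m)) m%:Z &
      Deq t.+1 (Delta p q t.*2.+3 (Zm p q t.*2.+2 m)) (true, m%:Z * (p%:Z - q%:Z))].
Proof.
split; first exact: ZJ.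
- case: S => [[Jp Jq] [[Pp Pq] _]].
  rewrite half2 in Pp Pq.
  have PX := pow_psi H m Jp; have PY := pow_psi H m Jq; rewrite half2 in PX PY.
  have SPm := eqmMl m%:Z Pp; have SQm := eqmMl m%:Z Pq.
  rewrite psiO ZmL ZmR; apply: dv_uniq => //.
  apply: (eqm_use5 (-1) (-1) (-1) (-1) 0 PX PY SPm SQm (eqm_refl _ 0)).
  by rewrite PoszD; ring.
- case: S => [[Jp Jq] [[Pp Pq] _]].
  rewrite half2 in Pp Pq.
  have PX := pow_psi H m Jp; have PY := pow_psi H m Jq; rewrite half2 in PX PY.
  have SPm := eqmMl m%:Z Pp; have SQm := eqmMl m%:Z Pq.
  rewrite DeltaO ZmL ZmR Zmf; split => //=.
  apply: eqm_trans (eqm_mdl _ _) _.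
  apply: (eqm_use5 1 (-1) 1 (-1) 0 PX PY SPm SQm (eqm_refl _ 0)).
  by ring.
Qed.

Lemma arith_even (m : nat) (P Q : int) :
  m%:Z * (P + Q) ^+ 2 = 2 * ((uphalf m)%:Z * (P * P) + (m./2)%:Z * (P * Q)
     + ((uphalf m)%:Z * (Q * P) + (m./2)%:Z * (Q * Q))) - delta (odd m) * (P + Q) * (P - Q).
Proof.
rewrite uphalf_half -{1}(odd_double_half m).
by case: (odd m); rewrite /delta PoszD -muln2 PoszM /=; ring.
Qed.

Lemma Zeven p q t (hpq : odd (p + q)) (H2 : HomP p q t.*2.+2) (H3 : HomP p q t.*2.+3)
  (S2 : SP p q t.*2.+2) (S3 : SP p q t.*2.+3) m :
  [/\ inJ p q t.*2.+4 (Zm p q t.*2.+3 m),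
      eqm t.+2 (psi p q t.*2.+4 (Zm p q t.*2.+3 m)) m%:Z &
      Deq t.+2 (Delta p q t.*2.+4 (Zm p q t.*2.+3 m)) (true, m%:Z * (p%:Z - q%:Z))].
Proof.
have JZ : inJ p q t.*2.+4 (Zm p q t.*2.+3 m) by exact: ZJ.
have R1 := eqm_refl t.+1 0; have R2 := eqm_refl t.+2 0.
have PZ : eqm t.+2 (psi p q t.*2.+4 (Zm p q t.*2.+3 m)) m%:Z.
  case: (S2) => [[Jp2 Jq2] [[Pp2 Pq2] _]]; rewrite half2 in Pp2 Pq2.
  have fp : af (brp p q t.*2.+3) = true by [].
  have fq : af (brq p q t.*2.+3) = true by [].
  have JpL : inJ p q t.*2.+2 (aL (brp p q t.*2.+3)) by rewrite brpE ZmL; exact: pow_J.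
  have JpR : inJ p q t.*2.+2 (aR (brp p q t.*2.+3)) by rewrite brpE ZmR; exact: pow_J.
  have JqL : inJ p q t.*2.+2 (aL (brq p q t.*2.+3)) by rewrite brqE ZmL; exact: pow_J.
  have JqR : inJ p q t.*2.+2 (aR (brq p q t.*2.+3)) by rewrite brqE ZmR; exact: pow_J.
  have [_ _ CX _] := pow_children H2 fp JpL JpR m; rewrite half2 in CX.
  have [_ _ CY _] := pow_children H2 fq JqL JqR m; rewrite half2 in CY.
  have PA := pow_psi H2 p Jp2; have PB := pow_psi H2 p Jq2.
  have PC := pow_psi H2 q Jp2; have PD := pow_psi H2 q Jq2.
  rewrite half2 in PA PB PC PD.
  have AX : eqm t.+1 (psi p q t.*2.+2 (aL (apow t.*2.+3 (brp p q t.*2.+3) m)))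
      ((uphalf m)%:Z * (p%:Z * p%:Z) + (m./2)%:Z * (p%:Z * q%:Z)).
    apply: eqm_trans CX _; rewrite brpE ZmL ZmR.
    apply: (eqm_use5 (uphalf m)%:Z ((uphalf m)%:Z * p%:Z) (m./2)%:Z ((m./2)%:Z * p%:Z) 0
              PA Pp2 PB Pq2 R1).
    by ring.
  have AY : eqm t.+1 (psi p q t.*2.+2 (aL (apow t.*2.+3 (brq p q t.*2.+3) m)))
      ((uphalf m)%:Z * (q%:Z * p%:Z) + (m./2)%:Z * (q%:Z * q%:Z)).
    apply: eqm_trans CY _; rewrite brqE ZmL ZmR.
    apply: (eqm_use5 (uphalf m)%:Z ((uphalf m)%:Z * q%:Z) (m./2)%:Z ((m./2)%:Z * q%:Z) 0
              PC Pp2 PD Pq2 R1).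
    by ring.
  rewrite psiE4; apply: dv_uniq; first exact: odd_sq.
  rewrite /Pe ZmL ZmR af_pow fp /=.
  apply: (eqm_use5 (-1) (-1) 0 0 0 (eqm2 AX) (eqm2 AY) R2 R2 R2).
  by rewrite -sq_pq !PoszD arith_even; ring.
split => //.
case: (S3) => [[Jp3 Jq3] [[Pp3 Pq3] _]]; rewrite half3 in Pp3 Pq3.
have PQ := pow_psi H3 m Jq3; rewrite half3 in PQ.
have Y2 := eqm2 (eqm_trans PQ (eqmMl m%:Z Pq3)).
rewrite DeltaEv Zmf ZmR; split => //=.
apply: eqm_trans (eqm_mdl _ _) _.
apply: (eqm_use5 (p + q)%:Z (-1) 0 0 0 PZ Y2 R2 R2 R2).
by rewrite PoszD; ring.
Qed.

Definition YP p q n := [/\ inJ p q n (yy p q n), eqm n./2 (psi p q n (yy p q n)) 1 &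
  Deq n./2 (Delta p q n (yy p q n)) (false, p%:Z - q%:Z)].

Lemma eqm1_2 x : eqm 1 (2 * x) 0.
Proof. by rewrite /eqm /M subr0 expn1 mulrC dvdz_mull ?dvdzz. Qed.

Lemma par m : eqm 1 (delta (odd m)) m%:Z.
Proof.
rewrite -{2}(odd_double_half m) PoszD -muln2 PoszM.
have R := eqm_refl 1 0.
apply: (eqm_use5 (-1) 0 0 0 0 (eqm1_2 (m./2)%:Z) R R R R).
by case: (odd m); rewrite /delta /=; ring.
Qed.

Lemma yyE p q n : yy p q n.+2 = (false, brp p q n.+1, brq p q n.+1). Proof. by []. Qed.

Lemma SP2 p q (hpq : odd (p + q)) : SP p q 2 /\ YP p q 2.
Proof.
have R := eqm_refl 1 0.
have PQ : eqm 1 1 (p + q)%:Z by have := par (p + q); rewrite hpq.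
have Pp := par p; have Pq := par q.
split; [split; [split|split]|split].
- by apply/inJ2.
- by apply/inJ2.
- by split; rewrite psi2 /aL /= af_pow.
- split.
    rewrite Delta2 /aL /= af_pow /=; split => //=.
    apply: (eqm_use5 1 p%:Z 1 0 0 Pp PQ (eqm1_2 (p%:Z * q%:Z)) R R).
    by rewrite PoszD; ring.
  rewrite Delta2 /aL /= af_pow /=; split => //=.
  apply: (eqm_use5 1 q%:Z 1 0 0 Pq PQ (eqm1_2 (q%:Z * q%:Z)) R R).
  by rewrite PoszD; ring.
- by apply/inJ2.
- by rewrite psi2 yyE /aL /=; apply: eqm_refl.
- rewrite Delta2 yyE /aL /af /=; split => //=.
  apply: (eqm_use5 1 1 0 0 0 PQ (eqm1_2 q%:Z) R R R).
  by rewrite PoszD; ring.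
Qed.

Lemma Yodd p q t (hpq : odd (p + q)) (S : SP p q t.*2.+2) : YP p q t.*2.+3.
Proof.
case: S => [[Jp Jq] [[Pp Pq] [Dp Dq]]]; rewrite half2 in Pp Pq Dp Dq.
have R := eqm_refl t.+1 0.
rewrite /YP half3; split.
- apply/inJ3P; rewrite yyE half2 /aL /aR /=; split => //.
  apply: Deq_trans Dp _; apply: Deq_sym; apply: Deq_trans (PhiR_Deq p q Dq) _.
  split => //=; rewrite /delta; apply: eqm_eq; rewrite PoszD; ring.
- rewrite psiO yyE /aL /aR /=; apply: dv_uniq => //.
  apply: (eqm_use5 (-1) (-1) 0 0 0 Pp Pq R R R).
  by rewrite PoszD; ring.
- rewrite DeltaO yyE /aL /aR /af /=; split => //=.
  apply: eqm_trans (eqm_mdl _ _) _.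
  apply: (eqm_use5 1 (-1) 0 0 0 Pp Pq R R R).
  by ring.
Qed.

Lemma Yeven p q t (hpq : odd (p + q)) (H2 : HomP p q t.*2.+2)
  (S2 : SP p q t.*2.+2) (S3 : SP p q t.*2.+3) : YP p q t.*2.+4.
Proof.
case: (S2) => [[Jp2 Jq2] [[Pp2 Pq2] _]]; rewrite half2 in Pp2 Pq2.
case: (S3) => [[Jp Jq] [[Pp Pq] [Dp Dq]]]; rewrite half3 in Pp Pq Dp Dq.
have R1 := eqm_refl t.+1 0; have R2 := eqm_refl t.+2 0.
have PY : eqm t.+2 (psi p q t.*2.+4 (yy p q t.*2.+4)) 1.
  have PA := pow_psi H2 p Jp2; have PC := pow_psi H2 q Jp2.
  rewrite half2 in PA PC.
  have A := eqm_trans PA (eqmMl p%:Z Pp2).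
  have B := eqm_trans PC (eqmMl q%:Z Pp2).
  rewrite psiE4; apply: dv_uniq; first exact: odd_sq.
  rewrite /Pe yyE /aL /aR /af /=.
  apply: (eqm_use5 (-1) (-1) 0 0 0 (eqm2 A) (eqm2 B) R2 R2 R2).
  by rewrite /delta -sq_pq PoszD; ring.
rewrite /YP half4; split => //.
- apply/inJ3P; rewrite yyE half3 /aL /aR /=; split => //.
  apply: Deq_trans Dp _; apply: Deq_sym; apply: Deq_trans (PhiR_Deq p q Dq) _.
  split => //=; rewrite /delta; apply: eqm_eq; rewrite PoszD; ring.
- rewrite DeltaEv; split => //=.
  apply: eqm_trans (eqm_mdl _ _) _.
  apply: (eqm_use5 (p + q)%:Z (-1) 0 0 0 PY (eqm2 Pq) R2 R2 R2).
  by rewrite PoszD; ring.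
Qed.

Lemma SPodd p q t (hpq : odd (p + q)) (H : HomP p q t.*2.+2) (S : SP p q t.*2.+2) :
  SP p q t.*2.+3.
Proof.
have [J1 P1 D1] := Zodd hpq H S p; have [J2 P2 D2] := Zodd hpq H S q.
by rewrite /SP half3 brpE brqE.
Qed.

Lemma SPeven p q t (hpq : odd (p + q)) (H2 : HomP p q t.*2.+2) (H3 : HomP p q t.*2.+3)
  (S2 : SP p q t.*2.+2) (S3 : SP p q t.*2.+3) : SP p q t.*2.+4.
Proof.
have [J1 P1 D1] := Zeven hpq H2 H3 S2 S3 p; have [J2 P2 D2] := Zeven hpq H2 H3 S2 S3 q.
by rewrite /SP half4 brpE brqE.
Qed.

Lemma SPall p q (hpq : odd (p + q)) t : SP p q t.*2.+2 /\ SP p q t.*2.+3.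
Proof.
have H t' : HomP p q t'.+1 by apply: HomAll.
elim: t => [|t [S2 S3]].
  have S2 := (SP2 hpq).1; split => //; exact: (@SPodd p q 0 hpq (H 1%N) S2).
have S4 := SPeven hpq (H _) (H _) S2 S3.
split; first exact: S4.
exact: (@SPodd p q t.+1 hpq (H _) S4).
Qed.

Lemma finish p q n : YP p q n -> SP p q n ->
  [/\ inJ p q n (yy p q n), inJ p q n (brp p q n) & inJ p q n (brq p q n)] /\
  [/\ md n./2 (psi p q n (yy p q n)) = md n./2 1,
      md n./2 (psi p q n (brp p q n)) = md n./2 p%:Z &
      md n./2 (psi p q n (brq p q n)) = md n./2 q%:Z] /\
  [/\ nD n./2 (Delta p q n (yy p q n)) = (false, md n./2 (p%:Z - q%:Z)),
      nD n./2 (Delta p q n (brp p q n)) = (true, md n./2 (p%:Z * (p%:Z - q%:Z))) &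
      nD n./2 (Delta p q n (brq p q n)) = (true, md n./2 (q%:Z * (p%:Z - q%:Z)))].
Proof.
case=> Jy Py Dy [[Jp Jq] [[Pp Pq] [Dp Dq]]].
split; first by split.
split; first by split; apply/eqm_md.
by split; [apply/(nD_eq _ _ (false, _)) | apply/(nD_eq _ _ (true, _)) | apply/(nD_eq _ _ (true, _))].
Qed.

Lemma parity_ind (P : nat -> Prop) :
  (forall t, P t.*2) -> (forall t, P t.*2.+1) -> forall n, P n.
Proof.
move=> He Ho n; rewrite -[n]odd_double_half; case: (odd n) => /=.
  by rewrite add1n; apply: Ho.
by rewrite add0n; apply: He.
Qed.

Unset Implicit Arguments.

Theorem theorem2 (p q : nat) (hp : (0 < p)%N) (hq : (0 < q)%N)
  (hpq : odd (p + q)) (n : nat) (hn : (1 <= n)%N) :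
  [/\ inJ p q n (yy p q n), inJ p q n (brp p q n) & inJ p q n (brq p q n)] /\
  [/\ md n./2 (psi p q n (yy p q n)) = md n./2 1,
      md n./2 (psi p q n (brp p q n)) = md n./2 p%:Z &
      md n./2 (psi p q n (brq p q n)) = md n./2 q%:Z] /\
  [/\ nD n./2 (Delta p q n (yy p q n)) = (false, md n./2 (p%:Z - q%:Z)),
      nD n./2 (Delta p q n (brp p q n)) = (true, md n./2 (p%:Z * (p%:Z - q%:Z))) &
      nD n./2 (Delta p q n (brq p q n)) = (true, md n./2 (q%:Z * (p%:Z - q%:Z)))].
Proof.
have H t' : HomP p q t'.+1 by apply: HomAll.
elim/parity_ind: n hn => t hn.
- case: t hn => [|t] // _.
  case: t => [|t].
    by case: (SP2 hpq) => S Y; apply: finish.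
  apply: finish; last by case: (SPall hpq t.+1).
  exact: Yeven hpq (H _) (SPall hpq t).1 (SPall hpq t).2.
- case: t hn => [|t] _.
    by split; [split; exact: I | split; [split|split]; rewrite /md /nD /= expn0 !modz1].
  apply: finish; last by case: (SPall hpq t).
  exact: Yodd hpq (SPall hpq t).1.
Qed.
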